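(* Let $M=(\mathcal{C},\mathcal{Q},p,q_0,q_f)$ be a nondeterministic finite-state automaton over a category. Then $\mathcal{W}(M)=(\mathcal{W}(\mathcal{C}),\mathcal{W}(\mathcal{Q}),\mathcal{W}(p),(q_0,q_f))$ is a nondeterministic finite-state automaton over an operad, and the language of constants it recognizes equals the language of arrows recognized by $M$ (identifying constants of $\mathcal{W}(\mathcal{C})$ of color $(A,B)$ with arrows $A\to B$ of $\mathcal{C}$).
   Context: Composition in categories is written diagrammatically. A functor of categories $p$ is ULF if for every arrow $\alpha$ and arrows $u,v$ with $p(\alpha)=uv$ there is a unique pair $\beta,\gamma$ with $\alpha=\beta\gamma$, $p(\beta)=u$, $p(\gamma)=v$; a functor of (colored, non-symmetric) operads $p$ is ULF if for every operation $\alpha$ and $g,h,i$ with $p(\alpha)=g\circ_i h$ there is a unique pair $\beta,\gamma$ with $\alpha=\beta\circ_i\gamma$, $p(\beta)=g$, $p(\gamma)=h$. A functor is finitary if its fibers over every object/color and every arrow/operation are finite. A nondeterministic finite-state automaton over a category is a tuple $(\mathcal{C},\mathcal{Q},p,q_0,q_f)$ with $p:\mathcal{Q}\to\mathcal{C}$ finitary ULF and $q_0,q_f$ objects of $\mathcal{Q}$; it recognizes $\{p(\alpha)\mid\alpha:q_0\to q_f\}\subseteq\mathcal{C}(p(q_0),p(q_f))$. A nondeterministic finite-state automaton over an operad is a tuple $(\mathcal{O},\mathcal{Q},p,q_r)$ with $p:\mathcal{Q}\to\mathcal{O}$ a finitary ULF functor of operads and $q_r$ a color of $\mathcal{Q}$;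 it recognizes the set $\{p(\alpha)\mid \alpha \text{ a constant (nullary operation) of } \mathcal{Q} \text{ of color } q_r\}$. The operad of spliced arrows $\mathcal{W}(\mathcal{C})$ has colors pairs $(A,B)$ of objects of $\mathcal{C}$; $n$-ary operations $(A_1,B_1),\dots,(A_n,B_n)\to(A,B)$ are sequences $w_0\text{-}\cdots\text{-}w_n$ with $w_0:A\to A_1$, $w_i:B_i\to A_{i+1}$ ($1\le i<n$), $w_n:B_n\to B$ (for $n=0$ a single arrow $A\to B$); partial composition is $(w_0\text{-}\cdots\text{-}w_n)\circ_i(u_0\text{-}\cdots\text{-}u_m)=w_0\text{-}\cdots\text{-}w_{i-2}\text{-}(w_{i-1}u_0)\text{-}u_1\text{-}\cdots\text{-}u_{m-1}\text{-}(u_mw_i)\text{-}w_{i+1}\text{-}\cdots\text{-}w_n$ with identities $\mathrm{id}_A\text{-}\mathrm{id}_B$; $\mathcal{W}(p)$ applies $p$ componentwise to colors and arrows. *)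

(* Defs.v *)
From Stdlib Require Import List Arith.
Import ListNotations.
Set Implicit Arguments.

(** * Categories (two-sorted presentation; composition is diagrammatic:
      [comp f g] is "f then g", defined when [tgt f = src g]). *)
Record CatData := {
  Ob : Type;
  Ar : Type;
  src : Ar -> Ob;
  tgt : Ar -> Ob;
  idc : Ob -> Ar;
  comp : Ar -> Ar -> Ar
}.
Arguments src {c}. Arguments tgt {c}. Arguments idc {c}. Arguments comp {c}.

Definition IsCategory (C : CatData) : Prop :=
  (forall A : Ob C, src (idc A) = A /\ tgt (idc A) = A) /\
  (forall f g : Ar C, tgt f = src g -> src (comp f g) = src f /\ tgt (comp f g) = tgt g) /\
  (forall f : Ar C, comp (idc (src f)) f = f) /\
  (forall f : Ar C, comp f (idc (tgt f)) = f) /\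
  (forall f g h : Ar C, tgt f = src g -> tgt g = src h ->
      comp (comp f g) h = comp f (comp g h)).

Record CatFunData (C D : CatData) := {
  fo : Ob C -> Ob D;
  fa : Ar C -> Ar D
}.
Arguments fo {C D}. Arguments fa {C D}.

Definition IsCatFunctor (C D : CatData) (F : CatFunData C D) : Prop :=
  (forall f : Ar C, src (fa F f) = fo F (src f) /\ tgt (fa F f) = fo F (tgt f)) /\
  (forall A : Ob C, fa F (idc A) = idc (fo F A)) /\
  (forall f g : Ar C, tgt f = src g -> fa F (comp f g) = comp (fa F f) (fa F g)).

Definition CatULF (Q C : CatData) (p : CatFunData Q C) : Prop :=
  forall (alpha : Ar Q) (u v : Ar C), tgt u = src v -> fa p alpha = comp u v ->
    exists! bg : Ar Q * Ar Q,
      tgt (fst bg) = src (snd bg) /\ alpha = comp (fst bg) (snd bg) /\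
      fa p (fst bg) = u /\ fa p (snd bg) = v.

Definition CatFinitary (Q C : CatData) (p : CatFunData Q C) : Prop :=
  (forall A : Ob C, exists l : list (Ob Q), forall X, fo p X = A -> In X l) /\
  (forall f : Ar C, exists l : list (Ar Q), forall alpha, fa p alpha = f -> In alpha l).

Record CatNFA := {
  nC : CatData;
  nQ : CatData;
  np : CatFunData nQ nC;
  nC_cat : IsCategory nC;
  nQ_cat : IsCategory nQ;
  np_fun : IsCatFunctor np;
  np_ulf : CatULF np;
  np_fin : CatFinitary np;
  nq0 : Ob nQ;
  nqf : Ob nQ
}.

Definition cat_lang (M : CatNFA) (f : Ar (nC M)) : Prop :=
  exists alpha : Ar (nQ M),
    src alpha = nq0 M /\ tgt alpha = nqf M /\ fa (np M) alpha = f.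

(** An operation [g] has output color [out g] and input colors [ins g];
      [ocomp g i h] is g o_(i+1) h  (the index [i] is 0-based). *)
Record OperadData := {
  Col : Type;
  Opr : Type;
  out : Opr -> Col;
  ins : Opr -> list Col;
  oid : Col -> Opr;
  ocomp : Opr -> nat -> Opr -> Opr
}.
Arguments out {o}. Arguments ins {o}. Arguments oid {o}. Arguments ocomp {o}.

Definition composable {O : OperadData} (g : Opr O) (i : nat) (h : Opr O) : Prop :=
  i < length (ins g) /\ out h = nth i (ins g) (out h).

Definition IsOperad (O : OperadData) : Prop :=
  (forall c : Col O, out (oid c) = c /\ ins (oid c) = [c]) /\
  (forall (g : Opr O) i h, composable g i h ->
     out (ocomp g i h) = out g /\
     ins (ocomp g i h) = firstn i (ins g) ++ ins h ++ skipn (S i) (ins g)) /\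
  (forall g : Opr O, ocomp (oid (out g)) 0 g = g) /\
  (forall (g : Opr O) i, i < length (ins g) ->
     ocomp g i (oid (nth i (ins g) (out g))) = g) /\
  (forall (g h k : Opr O) i j, composable g i h -> composable h j k ->
     ocomp (ocomp g i h) (i + j) k = ocomp g i (ocomp h j k)) /\
  (forall (g h k : Opr O) i j, composable g i h -> composable g j k -> i < j ->
     ocomp (ocomp g j k) i h = ocomp (ocomp g i h) (j - 1 + length (ins h)) k).

Record OpFunData (O P : OperadData) := {
  fc : Col O -> Col P;
  fop : Opr O -> Opr P
}.
Arguments fc {O P}. Arguments fop {O P}.

Definition IsOpFunctor (O P : OperadData) (F : OpFunData O P) : Prop :=
  (forall a : Opr O, out (fop F a) = fc F (out a) /\ ins (fop F a) = map (fc F) (ins a)) /\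
  (forall c : Col O, fop F (oid c) = oid (fc F c)) /\
  (forall (g : Opr O) i h, composable g i h -> fop F (ocomp g i h) = ocomp (fop F g) i (fop F h)).

Definition OpULF (Q O : OperadData) (p : OpFunData Q O) : Prop :=
  forall (alpha : Opr Q) (g h : Opr O) (i : nat), composable g i h ->
    fop p alpha = ocomp g i h ->
    exists! bg : Opr Q * Opr Q,
      composable (fst bg) i (snd bg) /\ alpha = ocomp (fst bg) i (snd bg) /\
      fop p (fst bg) = g /\ fop p (snd bg) = h.

Definition OpFinitary (Q O : OperadData) (p : OpFunData Q O) : Prop :=
  (forall c : Col O, exists l : list (Col Q), forall X, fc p X = c -> In X l) /\
  (forall g : Opr O, exists l : list (Opr Q), forall alpha, fop p alpha = g -> In alpha l).

Definition IsOpNFA (O Q : OperadData) (p : OpFunData Q O) (qr : Col Q) : Prop :=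
  IsOperad O /\ IsOperad Q /\ IsOpFunctor p /\ OpULF p /\ OpFinitary p.

Definition op_lang (O Q : OperadData) (p : OpFunData Q O) (qr : Col Q) (x : Opr O) : Prop :=
  exists alpha : Opr Q, ins alpha = [] /\ out alpha = qr /\ fop p alpha = x.

(** An operation w0-w1-...-wn is the nonempty list of arrows (w0, [w1;...;wn]);
      its colors are determined by the arrows: output (src w0, tgt wn),
      inputs (tgt w_(k-1), src w_k) for k = 1..n. *)
Section Spliced.
Variable C : CatData.

Definition WOp := (Ar C * list (Ar C))%type.

Fixpoint last_ar (w : Ar C) (ws : list (Ar C)) : Ar C :=
  match ws with [] => w | w' :: ws' => last_ar w' ws' end.

Fixpoint ins_aux (w : Ar C) (ws : list (Ar C)) : list (Ob C * Ob C) :=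
  match ws with [] => [] | w' :: ws' => (tgt w, src w') :: ins_aux w' ws' end.

Definition Wout (x : WOp) : Ob C * Ob C := (src (fst x), tgt (last_ar (fst x) (snd x))).
Definition Wins (x : WOp) : list (Ob C * Ob C) := ins_aux (fst x) (snd x).
Definition Wid (c : Ob C * Ob C) : WOp := (idc (fst c), [idc (snd c)]).

Definition tolist (x : WOp) : list (Ar C) := fst x :: snd x.
Definition oflist (d : Ar C) (l : list (Ar C)) : WOp :=
  match l with [] => (d, []) | x :: xs => (x, xs) end.

Fixpoint postl (x : Ar C) (xs : list (Ar C)) (b : Ar C) : list (Ar C) :=
  match xs with [] => [comp x b] | y :: ys => x :: postl y ys b end.

(* (w0-...-wn) o_(i+1) (u0-...-um)
   = w0-...-w_(i-1)-(w_i u0)-u1-...-u_(m-1)-(u_m w_(i+1))-w_(i+2)-...-wn *)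
Definition Wcomp (g : WOp) (i : nat) (h : WOp) : WOp :=
  let W := tolist g in
  let d := fst g in
  oflist d (firstn i W ++
            postl (comp (nth i W d) (fst h)) (snd h) (nth (S i) W d) ++
            skipn (S (S i)) W).

Definition Wop : OperadData := {|
  Col := (Ob C * Ob C)%type;
  Opr := WOp;
  out := Wout;
  ins := Wins;
  oid := Wid;
  ocomp := Wcomp
|}.
End Spliced.

Definition Wfun (Q C : CatData) (p : CatFunData Q C) : OpFunData (Wop Q) (Wop C) := {|
  fc := (fun c : Ob Q * Ob Q => (fo p (fst c), fo p (snd c))) : Col (Wop Q) -> Col (Wop C);
  fop := (fun x : WOp Q => (fa p (fst x), map (fa p) (snd x))) : Opr (Wop Q) -> Opr (Wop C)
|}.

(* Main.v *)
Require Import Defs.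
From Stdlib Require Import List Arith Lia.
Import ListNotations.


Fixpoint join {C : CatData} (X Y : list (Ar C)) : list (Ar C) :=
  match X with
  | [] => Y
  | x :: X' =>
    match X' with
    | [] => match Y with [] => [x] | y :: Y' => comp x y :: Y' end
    | _ => x :: join X' Y
    end
  end.

Definition Sr {C : CatData} (L : list (Ar C)) : option (Ob C) :=
  match L with [] => None | x :: _ => Some (src x) end.
Definition Tg {C : CatData} (L : list (Ar C)) : option (Ob C) :=
  match rev L with [] => None | x :: _ => Some (tgt x) end.

Lemma join_cons {C : CatData} (x : Ar C) X Y : X <> [] -> join (x :: X) Y = x :: join X Y.
Proof. destruct X; [congruence|reflexivity]. Qed.

Lemma join_single {C : CatData} (x y : Ar C) Y : join [x] (y :: Y) = comp x y :: Y.
Proof. reflexivity. Qed.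

Lemma join_nil {C : CatData} (X Y : list (Ar C)) : X <> [] -> join X Y <> [].
Proof. destruct X as [|x [|x' X]]; [congruence| destruct Y; simpl; congruence | simpl; congruence]. Qed.

Lemma Tg_cons {C : CatData} (a : Ar C) L : L <> [] -> Tg (a :: L) = Tg L.
Proof.
  intros H. unfold Tg. simpl. destruct (rev L) eqn:E.
  - apply (f_equal (@rev _)) in E. rewrite rev_involutive in E. simpl in E. congruence.
  - reflexivity.
Qed.

Lemma Tg_single {C : CatData} (a : Ar C) : Tg [a] = Some (tgt a).
Proof. reflexivity. Qed.

Lemma Tg_app {C : CatData} (X Y : list (Ar C)) : Y <> [] -> Tg (X ++ Y) = Tg Y.
Proof. intros H. induction X; simpl; auto. rewrite Tg_cons; auto. destruct X; simpl; congruence. Qed.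

Lemma Sr_app {C : CatData} (X Y : list (Ar C)) : X <> [] -> Sr (X ++ Y) = Sr X.
Proof. destruct X; simpl; congruence. Qed.

Lemma join_app_l {C : CatData} (A B Y : list (Ar C)) : B <> [] -> join (A ++ B) Y = A ++ join B Y.
Proof.
  intros HB. induction A; cbn [app]; auto.
  rewrite join_cons. rewrite IHA; auto. destruct A; simpl; congruence.
Qed.

Lemma join_app_r {C : CatData} (X Y1 Y2 : list (Ar C)) : X <> [] -> Y1 <> [] ->
  join X (Y1 ++ Y2) = join X Y1 ++ Y2.
Proof.
  intros HX HY. induction X as [|x X IH]; [congruence|].
  destruct X as [|x' X].
  - destruct Y1; [congruence|]. reflexivity.
  - rewrite !join_cons by congruence. rewrite IH by congruence. reflexivity.
Qed.

Lemma join_length {C : CatData} (X Y : list (Ar C)) : X <> [] -> Y <> [] ->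
  length (join X Y) = length X + length Y - 1.
Proof.
  intros HX HY. induction X as [|x X IH]; [congruence|].
  destruct X as [|x' X].
  - destruct Y; [congruence|]. simpl. lia.
  - rewrite join_cons by congruence. cbn [length]. rewrite IH by congruence. cbn [length]. destruct Y; cbn [length] in *; [congruence|]. lia.
Qed.

Lemma join_SrTg {C : CatData} (HC : IsCategory C) (X Y : list (Ar C)) : X <> [] -> Y <> [] ->
  Tg X = Sr Y -> Sr (join X Y) = Sr X /\ Tg (join X Y) = Tg Y.
Proof.
  destruct HC as [_ [Hst _]].
  intros HX HY. induction X as [|x X IH]; [congruence|]. intros E.
  destruct X as [|x' X].
  - destruct Y as [|y Y]; [congruence|]. simpl. rewrite Tg_single in E. simpl in E.
    injection E as E. destruct (Hst x y E) as [E1 E2]. split; [congruence|].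
    destruct Y as [|y' Y].
    + rewrite !Tg_single. congruence.
    + rewrite (Tg_cons (comp x y)) by congruence. rewrite (Tg_cons y) by congruence. reflexivity.
  - rewrite join_cons by congruence. rewrite Tg_cons in E by congruence.
    destruct (IH ltac:(congruence) E) as [_ E2]. split; [reflexivity|].
    rewrite Tg_cons; auto. apply join_nil; congruence.
Qed.

Lemma join_assoc {C : CatData} (HC : IsCategory C) (X Y Z : list (Ar C)) : X <> [] -> Y <> [] -> Z <> [] ->
  Tg X = Sr Y -> Tg Y = Sr Z -> join (join X Y) Z = join X (join Y Z).
Proof.
  intros HX HY HZ E1 E2.
  induction X as [|x X IH]; [congruence|].
  destruct X as [|x' X].
  - destruct Y as [|y Y]; [congruence|]. destruct Z as [|z Z]; [congruence|].
    rewrite join_single.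
    destruct Y as [|y' Y].
    + simpl. f_equal. destruct HC as [_ [_ [_ [_ Ha]]]]. apply Ha.
      * rewrite Tg_single in E1. simpl in E1. congruence.
      * rewrite Tg_single in E2. simpl in E2. congruence.
    + rewrite (join_cons (comp x y)) by congruence. rewrite (join_cons y) by congruence.
      rewrite join_single. reflexivity.
  - rewrite !join_cons by (try apply join_nil; congruence).
    rewrite IH by (try congruence; rewrite Tg_cons in E1 by congruence; auto). reflexivity.
Qed.

Definition insL {C : CatData} (L : list (Ar C)) : list (Ob C * Ob C) :=
  match L with [] => [] | x :: xs => ins_aux C x xs end.

Lemma tolist_inj {C : CatData} (x y : WOp C) : tolist x = tolist y -> x = y.
Proof. destruct x, y. unfold tolist. simpl. intros H; injection H; intros; subst; reflexivity. Qed.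

Lemma tolist_oflist {C : CatData} (d : Ar C) L : L <> [] -> tolist (oflist C d L) = L.
Proof. destruct L; [congruence|reflexivity]. Qed.

Lemma tolist_nn {C : CatData} (x : WOp C) : tolist x <> [].
Proof. unfold tolist. congruence. Qed.

Lemma Tg_some {C : CatData} (L : list (Ar C)) : L <> [] -> exists a, Tg L = Some a.
Proof. intros H. unfold Tg. destruct (rev L) eqn:E; eauto.
  apply (f_equal (@rev _)) in E. rewrite rev_involutive in E. simpl in E. congruence. Qed.

Lemma Sr_some {C : CatData} (L : list (Ar C)) : L <> [] -> exists a, Sr L = Some a.
Proof. destruct L; simpl; [congruence|eauto]. Qed.

Lemma Sr_tolist {C : CatData} (x : WOp C) : Sr (tolist x) = Some (fst (Wout x)).
Proof. reflexivity. Qed.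

Lemma Tg_tolist {C : CatData} (x : WOp C) : Tg (tolist x) = Some (snd (Wout x)).
Proof.
  destruct x as [w ws]. unfold tolist, Wout. simpl. revert w. induction ws as [|w' ws IH]; intros w.
  - reflexivity.
  - rewrite Tg_cons by congruence. simpl. apply IH.
Qed.

Lemma insL_app {C : CatData} (X Y : list (Ar C)) a b : Tg X = Some a -> Sr Y = Some b ->
  insL (X ++ Y) = insL X ++ (a, b) :: insL Y.
Proof.
  intros HX HY. induction X as [|x X IH]; [discriminate|].
  destruct X as [|x' X].
  - rewrite Tg_single in HX. injection HX as <-. destruct Y as [|y Y]; [discriminate|].
    simpl in HY. injection HY as <-. reflexivity.
  - rewrite Tg_cons in HX by congruence. specialize (IH HX).
    change (insL ((x :: x' :: X) ++ Y)) with ((tgt x, src x') :: insL ((x' :: X) ++ Y)).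
    rewrite IH. reflexivity.
Qed.

Lemma insL_length {C : CatData} (L : list (Ar C)) : length (insL L) = length L - 1.
Proof.
  destruct L as [|x L]; [reflexivity|]. simpl. revert x. induction L; intros; simpl; auto.
  rewrite IHL. simpl. lia.
Qed.

Lemma insL_join {C : CatData} (HC : IsCategory C) (X Y : list (Ar C)) : X <> [] -> Y <> [] ->
  Tg X = Sr Y -> insL (join X Y) = insL X ++ insL Y.
Proof.
  intros HX HY E. induction X as [|x X IH]; [congruence|].
  destruct X as [|x' X].
  - destruct Y as [|y Y]; [congruence|]. rewrite join_single. simpl.
    rewrite Tg_single in E. simpl in E. injection E as E.
    destruct HC as [_ [Hst _]]. destruct (Hst x y E) as [_ E2].
    destruct Y; simpl; congruence.
  - rewrite join_cons by congruence. rewrite Tg_cons in E by congruence.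
    destruct (join_SrTg HC (x' :: X) Y ltac:(congruence) HY E) as [E1 _].
    destruct (join (x' :: X) Y) as [|z Z] eqn:EJ.
    + exfalso; apply (join_nil (x'::X) Y); congruence.
    + change (insL (x :: z :: Z)) with ((tgt x, src z) :: insL (z :: Z)).
      rewrite IH by congruence. simpl in E1. injection E1 as ->. reflexivity.
Qed.

Lemma postl_join {C : CatData} (x : Ar C) xs b : postl C x xs b = join (x :: xs) [b].
Proof.
  revert x. induction xs as [|y ys IH]; intros x; [reflexivity|].
  rewrite join_cons by congruence. simpl. f_equal. apply IH.
Qed.

Lemma split_nth {A : Type} (W : list A) i d : S i < length W ->
  firstn (S i) W = firstn i W ++ [nth i W d] /\ skipn (S i) W = nth (S i) W d :: skipn (S (S i)) W.
Proof.
  revert W. induction i as [|i IH]; intros W HW.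
  - destruct W as [|a [|b W]]; simpl in *; try lia. auto.
  - destruct W as [|a W]; simpl in *; try lia. destruct (IH W ltac:(lia)) as [E1 E2].
    split; [rewrite E1; reflexivity| exact E2].
Qed.

Definition Lcomp {C : CatData} (W : list (Ar C)) (i : nat) (H : list (Ar C)) :=
  join (join (firstn (S i) W) H) (skipn (S i) W).

Lemma Wcomp_list {C : CatData} (g h : WOp C) i : i < length (snd g) ->
  tolist (Wcomp g i h) = Lcomp (tolist g) i (tolist h).
Proof.
  intros Hi. unfold Wcomp, Lcomp.
  set (W := tolist g). set (d := fst g).
  assert (HW : S i < length W) by (unfold W, tolist; simpl; lia).
  destruct (split_nth W i d HW) as [E1 E2]. rewrite E1, E2.
  destruct h as [h0 hs]. change (tolist (h0, hs)) with (h0 :: hs). simpl fst; simpl snd.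
  rewrite join_app_l by congruence. rewrite join_single.
  rewrite join_app_l by congruence.
  change (nth (S i) W d :: skipn (S (S i)) W) with ([nth (S i) W d] ++ skipn (S (S i)) W).
  rewrite join_app_r by congruence. rewrite <- postl_join.
  apply tolist_oflist. destruct (firstn i W); [|simpl; congruence]. rewrite postl_join. rewrite app_nil_l. intros Hc. apply app_eq_nil in Hc. destruct Hc as [Hc _]. revert Hc. apply join_nil. congruence.
Qed.

Lemma firstn_skipn_nn {A : Type} (W : list A) i : S i < length W ->
  firstn (S i) W <> [] /\ skipn (S i) W <> [] /\ length (firstn (S i) W) = S i.
Proof.
  intros H. rewrite length_firstn. split; [|split].
  - destruct W; simpl in *; [lia|congruence].
  - intros E. pose proof (length_skipn (S i) W) as L. rewrite E in L. simpl in L. lia.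
  - lia.
Qed.

Lemma composable_iff {C : CatData} (g h : WOp C) i :
  @composable (Wop C) g i h <->
  (i < length (snd g) /\ Tg (firstn (S i) (tolist g)) = Sr (tolist h) /\
   Tg (tolist h) = Sr (skipn (S i) (tolist g))).
Proof.
  unfold composable. change (@ins (Wop C) g) with (Wins g). change (@out (Wop C) h) with (Wout h).
  change (Col (Wop C)) with (prod (Ob C) (Ob C)).
  assert (EL : length (Wins g) = length (snd g)).
  { unfold Wins. change (ins_aux C (fst g) (snd g)) with (insL (tolist g)).
    rewrite insL_length. unfold tolist; simpl; lia. }
  rewrite EL.
  split.
  - intros [Hi Ho]. split; [exact Hi|].
    set (W := tolist g).
    assert (HW : S i < length W) by (unfold W, tolist; simpl; lia).
    destruct (firstn_skipn_nn W i HW) as [NA [NB LA]].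
    destruct (Tg_some _ NA) as [a Ea]. destruct (Sr_some _ NB) as [b Eb].
    pose proof (insL_app _ _ a b Ea Eb) as EI. rewrite firstn_skipn in EI.
    unfold Wins in Ho. change (ins_aux C (fst g) (snd g)) with (insL W) in Ho.
    rewrite EI in Ho. rewrite app_nth2 in Ho by (rewrite insL_length; lia).
    rewrite insL_length, LA in Ho. replace (i - (S i - 1)) with 0 in Ho by lia. simpl in Ho.
rewrite Ea, Eb, Sr_tolist, Tg_tolist. rewrite Ho. auto.
  - intros [Hi [E1 E2]]. split; [exact Hi|].
    set (W := tolist g) in *.
    assert (HW : S i < length W) by (unfold W, tolist; simpl; lia).
    destruct (firstn_skipn_nn W i HW) as [NA [NB LA]].
    destruct (Tg_some _ NA) as [a Ea]. destruct (Sr_some _ NB) as [b Eb].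
    pose proof (insL_app _ _ a b Ea Eb) as EI. rewrite firstn_skipn in EI.
    unfold Wins. change (ins_aux C (fst g) (snd g)) with (insL W).
    rewrite EI. rewrite app_nth2 by (rewrite insL_length; lia).
    rewrite insL_length, LA. replace (i - (S i - 1)) with 0 by lia. simpl.
    rewrite Sr_tolist in E1. rewrite Tg_tolist in E2. rewrite Ea in E1. rewrite Eb in E2.
    destruct (Wout h). simpl in *. congruence.
Qed.

Lemma out_eq {C : CatData} (x y : WOp C) : Sr (tolist x) = Sr (tolist y) -> Tg (tolist x) = Tg (tolist y) -> Wout x = Wout y.
Proof. rewrite !Sr_tolist, !Tg_tolist. destruct (Wout x), (Wout y). simpl. congruence. Qed.

Lemma join_id_r {C : CatData} (HC : IsCategory C) (G : list (Ar C)) t : Tg G = Some t -> join G [idc t] = G.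
Proof.
  intros E. induction G as [|x G IH]; [discriminate|].
  destruct G as [|x' G].
  - rewrite Tg_single in E. injection E as <-. simpl. f_equal. apply HC.
  - rewrite join_cons by congruence. rewrite Tg_cons in E by congruence. rewrite IH; auto.
Qed.

Lemma join_id_l {C : CatData} (HC : IsCategory C) (G : list (Ar C)) s : Sr G = Some s -> join [idc s] G = G.
Proof.
  intros E. destruct G as [|x G]; [discriminate|]. simpl in E. injection E as <-.
  simpl. f_equal. apply HC.
Qed.

Lemma ins_split {C : CatData} (W : list (Ar C)) i a b : S i < length W ->
  Tg (firstn (S i) W) = Some a -> Sr (skipn (S i) W) = Some b ->
  insL W = insL (firstn (S i) W) ++ (a, b) :: insL (skipn (S i) W) /\ length (insL (firstn (S i) W)) = i.
Proof.
  intros HW Ea Eb. destruct (firstn_skipn_nn W i HW) as [_ [_ LA]].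
  split.
  - rewrite <- (insL_app _ _ a b Ea Eb). rewrite firstn_skipn. reflexivity.
  - rewrite insL_length, LA. lia.
Qed.

Lemma Wins_insL {C : CatData} (x : WOp C) : Wins x = insL (tolist x).
Proof. reflexivity. Qed.

Ltac nn := first [ assumption | apply tolist_nn | apply join_nil; nn | congruence | (intro; discriminate) ].

Lemma W_operad (C : CatData) (HC : IsCategory C) : IsOperad (Wop C).
Proof.
  pose proof HC as HC'. destruct HC' as [Hid [Hst [Hl [Hr Has]]]].
  unfold IsOperad. change (Col (Wop C)) with (prod (Ob C) (Ob C)).
  change (Opr (Wop C)) with (WOp C).
  change (@out (Wop C)) with (@Wout C). change (@ins (Wop C)) with (@Wins C).
  change (@oid (Wop C)) with (Wid C). change (@ocomp (Wop C)) with (@Wcomp C).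
  split; [|split; [|split; [|split; [|split]]]].
  -
    intros [a b]. unfold Wout, Wins, Wid. simpl.
    destruct (Hid a) as [E1 _]. destruct (Hid b) as [_ E2].
    destruct (Hid a) as [_ E3]. destruct (Hid b) as [E4 _]. rewrite E1, E2, E3, E4. auto.
  -
    intros g i h Hc. apply composable_iff in Hc. destruct Hc as [Hi [E1 E2]].
    set (W := tolist g) in *. set (H := tolist h) in *.
    assert (HW : S i < length W) by (unfold W, tolist; simpl; lia).
    destruct (firstn_skipn_nn W i HW) as [NA [NB LA]].
    set (A := firstn (S i) W) in *. set (B := skipn (S i) W) in *.
    assert (NH : H <> []) by apply tolist_nn.
    assert (EW : W = A ++ B) by (symmetry; apply firstn_skipn).
    pose proof (Wcomp_list g h i Hi) as EC. fold W H in EC. unfold Lcomp in EC. fold A B in EC.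
    destruct (join_SrTg HC A H NA NH E1) as [S1 T1].
    assert (E2' : Tg (join A H) = Sr B) by congruence.
    destruct (join_SrTg HC (join A H) B ltac:(nn) NB E2') as [S2 T2].
    split.
    + apply out_eq; rewrite EC; fold W.
      * rewrite S2, S1, EW. rewrite Sr_app; auto.
      * rewrite T2, EW. rewrite Tg_app; auto.
    + rewrite !Wins_insL. rewrite EC. fold W H.
      destruct (Tg_some _ NA) as [a Ea]. destruct (Sr_some _ NB) as [b Eb].
      destruct (ins_split W i a b HW Ea Eb) as [EI LI]. fold A B in EI, LI.
      rewrite EI. rewrite firstn_app, LI, Nat.sub_diag, firstn_O, app_nil_r, firstn_all2 by lia.
      rewrite skipn_app. rewrite skipn_all2 by lia. rewrite app_nil_l, LI.
      replace (S i - i) with 1 by lia. simpl skipn.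
      rewrite (insL_join HC (join A H) B) by nn. rewrite (insL_join HC A H) by nn.
      rewrite app_assoc. reflexivity.
  -
    intros g. apply tolist_inj. rewrite Wcomp_list by (simpl; lia).
    unfold Lcomp. change (firstn 1 (tolist (Wid C (Wout g)))) with [idc (fst (Wout g))].
    change (skipn 1 (tolist (Wid C (Wout g)))) with [idc (snd (Wout g))].
    rewrite (join_id_l HC (tolist g) (fst (Wout g))) by apply Sr_tolist.
    apply (join_id_r HC). apply Tg_tolist.
  -
    intros g i Hi. rewrite Wins_insL, insL_length in Hi.
    assert (Hi' : i < length (snd g)) by (unfold tolist in Hi; simpl in Hi; lia).
    set (W := tolist g) in *.
    assert (HW : S i < length W) by (unfold W, tolist; simpl; lia).
    destruct (firstn_skipn_nn W i HW) as [NA [NB LA]].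
    destruct (Tg_some _ NA) as [a Ea]. destruct (Sr_some _ NB) as [b Eb].
    destruct (ins_split W i a b HW Ea Eb) as [EI LI].
    apply tolist_inj. rewrite Wcomp_list by exact Hi'. fold W.
    rewrite Wins_insL. fold W. rewrite EI. rewrite app_nth2 by lia. rewrite LI, Nat.sub_diag. simpl nth.
    unfold Lcomp. change (tolist (Wid C (a, b))) with ([idc a] ++ [idc b]).
    rewrite join_app_r by nn. rewrite (join_id_r HC _ a Ea).
    rewrite join_app_l by nn. rewrite (join_id_l HC _ b Eb). apply firstn_skipn.
  -
    intros g h k i j Hgh Hhk.
    apply composable_iff in Hgh. destruct Hgh as [Hi [E1 E2]].
    apply composable_iff in Hhk. destruct Hhk as [Hj [E3 E4]].
    set (W := tolist g) in *. set (H := tolist h) in *. set (K := tolist k) in *.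
    assert (HW : S i < length W) by (unfold W, tolist; simpl; lia).
    assert (HH : S j < length H) by (unfold H, tolist; simpl; lia).
    destruct (firstn_skipn_nn W i HW) as [NA [NB LA]].
    destruct (firstn_skipn_nn H j HH) as [NH1 [NH2 LH1]].
    set (A := firstn (S i) W) in *. set (B := skipn (S i) W) in *.
    set (H1 := firstn (S j) H) in *. set (H2 := skipn (S j) H) in *.
    assert (NK : K <> []) by apply tolist_nn.
    assert (EH : H = H1 ++ H2) by (symmetry; apply firstn_skipn).
    assert (E1' : Tg A = Sr H1) by (rewrite E1, EH, Sr_app; auto).
    assert (E2' : Tg H2 = Sr B) by (rewrite <- E2, EH, Tg_app; auto).
    assert (EGH : tolist (Wcomp g i h) = join A H1 ++ join H2 B).
    { rewrite Wcomp_list by exact Hi. unfold Lcomp. fold W H A B.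
      rewrite EH. rewrite join_app_r by nn. rewrite join_app_l by nn. reflexivity. }
    assert (LAH1 : length (join A H1) = S (i + j)) by (rewrite join_length by nn; lia).
    apply tolist_inj.
    rewrite Wcomp_list.
    2:{ assert (L : S (length (snd (Wcomp g i h))) = length (join A H1 ++ join H2 B)) by (rewrite <- EGH; reflexivity).
        rewrite length_app, LAH1 in L. rewrite join_length in L by nn.
        destruct B; [congruence|]. destruct H2; [congruence|]. simpl in L. lia. }
    rewrite (Wcomp_list g (Wcomp h j k) i Hi). fold W.
    rewrite (Wcomp_list h k j Hj). fold H K.
    unfold Lcomp. rewrite EGH. fold A B H1 H2.
    rewrite firstn_app, LAH1, Nat.sub_diag, firstn_O, app_nil_r, firstn_all2 by lia.
    rewrite skipn_app, skipn_all2 by lia. rewrite LAH1, Nat.sub_diag, skipn_O, app_nil_l.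
    destruct (join_SrTg HC A H1 NA NH1 E1') as [S1 T1].
    destruct (join_SrTg HC K H2 NK NH2 E4) as [S2 T2].
    destruct (join_SrTg HC H2 B NH2 NB E2') as [S3 T3].
    destruct (join_SrTg HC H1 K NH1 NK E3) as [S4 T4].
    destruct (join_SrTg HC (join H1 K) H2 ltac:(nn) NH2 ltac:(congruence)) as [S6 T6].
    rewrite (join_assoc HC (join A H1) K (join H2 B)) by (try nn; congruence).
    rewrite (join_assoc HC A H1 (join K (join H2 B))) by (try nn; destruct (join_SrTg HC K (join H2 B) NK ltac:(nn) ltac:(congruence)); congruence).
    rewrite (join_assoc HC A (join (join H1 K) H2) B) by (try nn; congruence).
    rewrite (join_assoc HC (join H1 K) H2 B) by (try nn; congruence).
    rewrite (join_assoc HC H1 K (join H2 B)) by (try nn; congruence).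
    reflexivity.
  -
    intros g h k i j Hgh Hgk Hij.
    apply composable_iff in Hgh. destruct Hgh as [Hi [E1 E2]].
    apply composable_iff in Hgk. destruct Hgk as [Hj [E3 E4]].
    set (W := tolist g) in *. set (H := tolist h) in *. set (K := tolist k) in *.
    assert (HW : S j < length W) by (unfold W, tolist; simpl; lia).
    set (A := firstn (S i) W) in *.
    set (B := firstn (j - i) (skipn (S i) W)).
    set (D := skipn (S j) W) in *.
    assert (EW1 : firstn (S j) W = A ++ B).
    { unfold A, B. rewrite <- (firstn_skipn (S i) W) at 1.
      rewrite firstn_app. rewrite firstn_firstn. rewrite length_firstn.
      replace (Init.Nat.min (S j) (S i)) with (S i) by lia.
      replace (S j - Init.Nat.min (S i) (length W)) with (j - i) by lia. reflexivity. }
    assert (EW2 : skipn (S i) W = B ++ D).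
    { unfold B, D. rewrite <- (firstn_skipn (j - i) (skipn (S i) W)) at 1. f_equal.
      rewrite skipn_skipn. f_equal. lia. }
    assert (LB : length B = j - i).
    { unfold B. rewrite length_firstn, length_skipn. lia. }
    assert (LA : length A = S i).
    { unfold A. rewrite length_firstn. lia. }
    assert (ND : D <> []).
    { unfold D. intros Ec. pose proof (length_skipn (S j) W) as L. rewrite Ec in L. simpl in L. lia. }
    assert (NA : A <> []) by (destruct A; simpl in LA; congruence).
    assert (NB : B <> []) by (destruct B; simpl in LB; [lia|congruence]).
    assert (NH : H <> []) by apply tolist_nn.
    assert (NK : K <> []) by apply tolist_nn.
    rewrite EW1 in E3. rewrite Tg_app in E3 by nn.
    rewrite EW2 in E2. rewrite Sr_app in E2 by nn.
    assert (EGK : tolist (Wcomp g j k) = A ++ join (join B K) D).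
    { rewrite Wcomp_list by exact Hj. unfold Lcomp. fold W K. rewrite EW1. fold D.
      rewrite join_app_l by nn. rewrite join_app_l by nn. reflexivity. }
    assert (EGH : tolist (Wcomp g i h) = join (join A H) B ++ D).
    { rewrite Wcomp_list by exact Hi. unfold Lcomp. fold W H. fold A. rewrite EW2.
      rewrite join_app_r by nn. reflexivity. }
    assert (LAHB : length (join (join A H) B) = S (j - 1 + length (Wins h))).
    { rewrite Wins_insL, insL_length. fold H. rewrite !join_length by nn. rewrite LA, LB.
      destruct H; [congruence|]. simpl. lia. }
    apply tolist_inj.
    assert (HL1 : i < length (snd (Wcomp g j k))).
    { assert (L : S (length (snd (Wcomp g j k))) = length (A ++ join (join B K) D)) by (rewrite <- EGK; reflexivity).
        rewrite length_app, LA in L. rewrite join_length in L by nn. rewrite join_length in L by nn.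
        destruct D; [congruence|]. destruct K; [congruence|]. simpl in L. lia. }
    assert (HL2 : j - 1 + length (Wins h) < length (snd (Wcomp g i h))).
    { assert (L : S (length (snd (Wcomp g i h))) = length (join (join A H) B ++ D)) by (rewrite <- EGH; reflexivity).
        rewrite length_app, LAHB in L. destruct D; [congruence|]. simpl in L. lia. }
    rewrite (Wcomp_list _ _ _ HL1), (Wcomp_list _ _ _ HL2).
    unfold Lcomp. rewrite EGK, EGH. fold H K.
    rewrite firstn_app, LA, Nat.sub_diag, firstn_O, app_nil_r, firstn_all2 by lia.
    rewrite skipn_app, skipn_all2 by lia. rewrite LA, Nat.sub_diag, skipn_O, app_nil_l.
    rewrite firstn_app, LAHB, Nat.sub_diag, firstn_O, app_nil_r, firstn_all2 by lia.
    rewrite skipn_app, skipn_all2 by lia. rewrite LAHB, Nat.sub_diag, skipn_O, app_nil_l.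
    destruct (join_SrTg HC A H NA NH E1) as [S1 T1].
    destruct (join_SrTg HC H B NH NB E2) as [S2 T2].
    destruct (join_SrTg HC B K NB NK E3) as [S3 T3].
    destruct (join_SrTg HC K D NK ND E4) as [S4 T4].
    destruct (join_SrTg HC (join A H) B ltac:(nn) NB ltac:(congruence)) as [S5 T5].
    destruct (join_SrTg HC (join B K) D ltac:(nn) ND ltac:(congruence)) as [S6 T6].
    rewrite (join_assoc HC A H (join (join B K) D)) by (try nn; congruence).
    rewrite (join_assoc HC (join (join A H) B) K D) by (try nn; congruence).
    rewrite (join_assoc HC (join A H) B (join K D)) by (try nn; congruence).
    rewrite (join_assoc HC A H (join B (join K D))) by (try nn; destruct (join_SrTg HC B (join K D) NB ltac:(nn) ltac:(congruence)); congruence).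
    rewrite (join_assoc HC B K D) by (try nn; congruence).
    reflexivity.
Qed.


Lemma tolist_fop {Q C : CatData} (p : CatFunData Q C) (x : WOp Q) :
  tolist (fop (Wfun p) x) = map (fa p) (tolist x).
Proof. reflexivity. Qed.

Lemma Sr_map {Q C : CatData} (p : CatFunData Q C) (Hp : IsCatFunctor p) L :
  Sr (map (fa p) L) = option_map (fo p) (Sr L).
Proof. destruct L; simpl; auto. f_equal. apply Hp. Qed.

Lemma Tg_map {Q C : CatData} (p : CatFunData Q C) (Hp : IsCatFunctor p) L :
  Tg (map (fa p) L) = option_map (fo p) (Tg L).
Proof. unfold Tg. rewrite <- map_rev. destruct (rev L); simpl; auto. f_equal. apply Hp. Qed.

Lemma map_join {Q C : CatData} (p : CatFunData Q C) (Hp : IsCatFunctor p) (X Y : list (Ar Q)) :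
  X <> [] -> Tg X = Sr Y -> map (fa p) (join X Y) = join (map (fa p) X) (map (fa p) Y).
Proof.
  intros HX E. induction X as [|x X IH]; [congruence|].
  destruct X as [|x' X].
  - destruct Y as [|y Y]; [reflexivity|]. simpl. rewrite Tg_single in E. simpl in E. injection E as E.
    f_equal. apply Hp. exact E.
  - rewrite join_cons by congruence. rewrite Tg_cons in E by congruence.
    cbn [map]. rewrite IH by congruence. cbn [map]. rewrite (join_cons (fa p x)) by congruence. reflexivity.
Qed.

Lemma insL_map {Q C : CatData} (p : CatFunData Q C) (Hp : IsCatFunctor p) L :
  insL (map (fa p) L) = map (fun c => (fo p (fst c), fo p (snd c))) (insL L).
Proof.
  destruct L as [|x L]; [reflexivity|]. simpl. revert x. induction L as [|y L IH]; intros x; [reflexivity|].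
  simpl. rewrite IH. f_equal. destruct Hp as [Hst _]. destruct (Hst x), (Hst y). congruence.
Qed.

Lemma W_functor {Q C : CatData} (HQ : IsCategory Q) (p : CatFunData Q C) (Hp : IsCatFunctor p) :
  IsOpFunctor (Wfun p).
Proof.
  split; [|split].
  - intros a. split.
    + change (Wout (fop (Wfun p) a) = (fo p (fst (Wout a)), fo p (snd (Wout a)))).
      set (y := fop (Wfun p) a).
      assert (E1 : Some (fst (Wout y)) = Some (fo p (fst (Wout a)))).
      { rewrite <- Sr_tolist. unfold y. rewrite tolist_fop, Sr_map, Sr_tolist by exact Hp. reflexivity. }
      assert (E2 : Some (snd (Wout y)) = Some (fo p (snd (Wout a)))).
      { rewrite <- Tg_tolist. unfold y. rewrite tolist_fop, Tg_map, Tg_tolist by exact Hp. reflexivity. }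
      injection E1 as E1. injection E2 as E2. rewrite (surjective_pairing (Wout y)). exact (f_equal2 pair E1 E2).
    + change (insL (tolist (fop (Wfun p) a)) = map (fun c => (fo p (fst c), fo p (snd c))) (insL (tolist a))).
      rewrite tolist_fop. apply insL_map. exact Hp.
  - intros [a b]. simpl. unfold Wid. simpl. destruct Hp as [_ [Hi _]]. rewrite !Hi. reflexivity.
  - intros g i h Hc. apply composable_iff in Hc. destruct Hc as [Hi [E1 E2]].
    apply tolist_inj.
    change (tolist (fop (Wfun p) (Wcomp g i h)) = tolist (Wcomp (fop (Wfun p) g) i (fop (Wfun p) h))).
    rewrite tolist_fop. rewrite !Wcomp_list; auto.
    2:{ simpl. rewrite length_map. exact Hi. }
    unfold Lcomp. rewrite !tolist_fop. rewrite firstn_map, skipn_map.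
    assert (HW : S i < length (tolist g)) by (unfold tolist; simpl; lia).
    destruct (firstn_skipn_nn _ i HW) as [NA [NB _]].
    rewrite map_join; auto. rewrite map_join; auto.
    apply join_nil; auto.
    destruct (join_SrTg HQ _ _ NA (tolist_nn h) E1) as [_ T]. congruence.
Qed.

Lemma join_lift {Q C : CatData} (p : CatFunData Q C) (Hp : IsCatFunctor p) (Hu : CatULF p) :
  forall (X Y : list (Ar C)) (Lam : list (Ar Q)), X <> [] -> Y <> [] -> Tg X = Sr Y ->
  map (fa p) Lam = join X Y ->
  exists Xi Ups, Tg Xi = Sr Ups /\ Lam = join Xi Ups /\ map (fa p) Xi = X /\ map (fa p) Ups = Y.
Proof.
  intros X Y. induction X as [|x X IH]; intros Lam HX HY E EM; [congruence|].
  destruct X as [|x' X].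
  - destruct Y as [|y Y]; [congruence|]. rewrite join_single in EM.
    destruct Lam as [|l Lam]; [discriminate|]. simpl in EM. injection EM as El EL.
    rewrite Tg_single in E. simpl in E. injection E as E.
    destruct (Hu l x y E El) as [[b c] [[H1 [H2 [H3 H4]]] _]]. simpl in *.
    exists [b], (c :: Lam). split; [|split; [|split]].
    + rewrite Tg_single. simpl. congruence.
    + rewrite join_single. congruence.
    + simpl. congruence.
    + simpl. congruence.
  - rewrite join_cons in EM by congruence. destruct Lam as [|l Lam]; [discriminate|].
    simpl in EM. injection EM as El EL. rewrite Tg_cons in E by congruence.
    destruct (IH Lam ltac:(congruence) HY E EL) as [Xi [Ups [T1 [E1 [M1 M2]]]]].
    assert (NX : Xi <> []) by (intro; subst Xi; discriminate).
    exists (l :: Xi), Ups. split; [|split; [|split]].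
    + rewrite Tg_cons by exact NX. exact T1.
    + rewrite join_cons by exact NX. congruence.
    + simpl. congruence.
    + exact M2.
Qed.

Lemma join_lift_uniq {Q C : CatData} (p : CatFunData Q C) (Hp : IsCatFunctor p) (Hu : CatULF p) :
  forall (X1 Y1 X2 Y2 : list (Ar Q)), X1 <> [] -> Y1 <> [] ->
  map (fa p) X1 = map (fa p) X2 -> map (fa p) Y1 = map (fa p) Y2 ->
  Tg X1 = Sr Y1 -> Tg X2 = Sr Y2 -> join X1 Y1 = join X2 Y2 -> X1 = X2 /\ Y1 = Y2.
Proof.
  intros X1. induction X1 as [|x1 X1 IH]; intros Y1 X2 Y2 N1 N2 MX MY T1 T2 EJ; [congruence|].
  destruct X2 as [|x2 X2]; [discriminate|]. simpl in MX. injection MX as Mx MX.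
  destruct X1 as [|x1' X1].
  - destruct X2; [|discriminate].
    destruct Y1 as [|c1 R1]; [congruence|]. destruct Y2 as [|c2 R2]; [discriminate|].
    simpl in MY. injection MY as Mc MR.
    rewrite !join_single in EJ. injection EJ as Ec ER.
    rewrite Tg_single in T1, T2. simpl in T1, T2. injection T1 as T1. injection T2 as T2.
    destruct Hp as [Hst [_ Hcomp]].
    assert (Hux : tgt (fa p x1) = src (fa p c1)).
    { destruct (Hst x1) as [_ A1]. destruct (Hst c1) as [A2 _]. congruence. }
    destruct (Hu (comp x1 c1) (fa p x1) (fa p c1) Hux (Hcomp _ _ T1)) as [bg [_ U]].
    assert (U1 := U (x1, c1) ltac:(simpl; repeat split; congruence)).
    assert (U2 := U (x2, c2) ltac:(simpl; repeat split; congruence)).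
    rewrite U1 in U2. injection U2 as <- <-. subst. auto.
  - destruct X2 as [|x2' X2]; [discriminate|].
    rewrite !join_cons in EJ by congruence. injection EJ as Ex EJ.
    rewrite Tg_cons in T1, T2 by congruence.
    destruct (IH Y1 (x2' :: X2) Y2 ltac:(congruence) N2 MX MY T1 T2 EJ) as [E3 ->]. rewrite E3. subst. auto.
Qed.


Lemma map_nn {A B : Type} (f : A -> B) (l : list A) (k : list B) : map f l = k -> k <> [] -> l <> [].
Proof. intros <- H E. subst. apply H. reflexivity. Qed.

Lemma W_ulf {Q C : CatData} (HQ : IsCategory Q) (HC : IsCategory C) (p : CatFunData Q C) (Hp : IsCatFunctor p) (Hu : CatULF p) :
  OpULF (Wfun p).
Proof.
  intros alpha g h i Hc Ea.
  change (Opr (Wop Q)) with (WOp Q) in *. change (Opr (Wop C)) with (WOp C) in *.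
  change (@ocomp (Wop C) g i h) with (Wcomp g i h) in Ea.
  apply composable_iff in Hc. destruct Hc as [Hi [E1 E2]].
  set (W := tolist g) in *. set (H := tolist h) in *.
  assert (HW : S i < length W) by (unfold W, tolist; simpl; lia).
  destruct (firstn_skipn_nn W i HW) as [NA [NB LA]].
  set (A := firstn (S i) W) in *. set (B := skipn (S i) W) in *.
  assert (NH : H <> []) by apply tolist_nn.
  assert (EM : map (fa p) (tolist alpha) = join (join A H) B).
  { rewrite <- tolist_fop. apply (f_equal (@tolist C)) in Ea. 
    rewrite Ea. rewrite Wcomp_list by exact Hi. reflexivity. }
  destruct (join_SrTg HC A H NA NH E1) as [_ T1].
  destruct (join_lift p Hp Hu (join A H) B (tolist alpha) ltac:(nn) NB ltac:(congruence) EM)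
    as [Xi [UB [T2 [Ealpha [M1 M2]]]]].
  destruct (join_lift p Hp Hu A H Xi NA NH E1 M1) as [XA [XH [T3 [EXi [M3 M4]]]]].
  assert (NXA : XA <> []) by exact (map_nn _ _ _ M3 NA).
  assert (NXH : XH <> []) by exact (map_nn _ _ _ M4 NH).
  assert (NUB : UB <> []) by exact (map_nn _ _ _ M2 NB).
  assert (LXA : length XA = S i) by (rewrite <- LA, <- M3, length_map; reflexivity).
  destruct (join_SrTg HQ XA XH NXA NXH T3) as [_ T4].
  set (beta := oflist Q (fst alpha) (XA ++ UB)).
  set (gamma := oflist Q (fst alpha) XH).
  assert (Eb : tolist beta = XA ++ UB) by (apply tolist_oflist; destruct XA; [congruence|discriminate]).
  assert (Eg : tolist gamma = XH) by (apply tolist_oflist; exact NXH).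
  assert (Hib : i < length (snd beta)).
  { assert (L : S (length (snd beta)) = length (XA ++ UB)) by (rewrite <- Eb; reflexivity).
    rewrite length_app, LXA in L. destruct UB; [congruence|]. simpl in L. lia. }
  assert (FB : firstn (S i) (tolist beta) = XA).
  { rewrite Eb, firstn_app, LXA, Nat.sub_diag, firstn_O, app_nil_r. apply firstn_all2. lia. }
  assert (SB : skipn (S i) (tolist beta) = UB).
  { rewrite Eb, skipn_app, LXA, Nat.sub_diag, skipn_O. rewrite skipn_all2 by lia. reflexivity. }
  exists (beta, gamma). split.
  - simpl. split; [|split; [|split]].
    + apply composable_iff. rewrite FB, SB, Eg. split; [exact Hib|]. split; congruence.
    + apply tolist_inj. change (tolist alpha = tolist (Wcomp beta i gamma)).
      rewrite Wcomp_list by exact Hib. unfold Lcomp. rewrite FB, SB, Eg. congruence.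
    + apply tolist_inj. change (tolist (fop (Wfun p) beta) = tolist g). rewrite tolist_fop, Eb, map_app.
      rewrite M3, M2. apply firstn_skipn.
    + apply tolist_inj. change (tolist (fop (Wfun p) gamma) = tolist h). rewrite tolist_fop, Eg. exact M4.
  - intros [b' c'] [Hc' [Ea' [Fb Fc]]]. simpl in Hc', Ea', Fb, Fc.
    change (Opr (Wop Q)) with (WOp Q) in *.
    apply composable_iff in Hc'. destruct Hc' as [Hi' [E1' E2']].
    set (Lb := tolist b') in *. set (Lc := tolist c') in *.
    assert (HLb : S i < length Lb) by (unfold Lb, tolist; simpl; lia).
    destruct (firstn_skipn_nn Lb i HLb) as [NA' [NB' LA']].
    set (A' := firstn (S i) Lb) in *. set (B' := skipn (S i) Lb) in *.
    assert (NLc : Lc <> []) by apply tolist_nn.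
    apply (f_equal (@tolist C)) in Fb. apply (f_equal (@tolist C)) in Fc.
    change (map (fa p) (tolist b') = W) in Fb. change (map (fa p) (tolist c') = H) in Fc. fold Lb in Fb. fold Lc in Fc.
    assert (MA : map (fa p) A' = A) by (unfold A', A; rewrite <- firstn_map, Fb; reflexivity).
    assert (MB : map (fa p) B' = B) by (unfold B', B; rewrite <- skipn_map, Fb; reflexivity).
    apply (f_equal (@tolist Q)) in Ea'.
    change (tolist alpha = tolist (Wcomp b' i c')) in Ea'.
    rewrite Wcomp_list in Ea' by exact Hi'. unfold Lcomp in Ea'. fold Lb Lc A' B' in Ea'.
    destruct (join_SrTg HQ A' Lc NA' NLc E1') as [_ T5].
    destruct (join_lift_uniq p Hp Hu (join A' Lc) B' Xi UB ltac:(nn) NB')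
      as [U1 U2]; [ rewrite map_join by (auto; exact Hp); congruence | congruence | congruence | exact T2 | congruence | ].
    destruct (join_lift_uniq p Hp Hu A' Lc XA XH NA' NLc) as [U3 U4]; [congruence|congruence|exact E1'|exact T3|congruence|].
    f_equal; apply tolist_inj.
    + change (tolist beta = Lb). rewrite Eb, <- U3, <- U2. apply firstn_skipn.
    + change (tolist gamma = Lc). rewrite Eg. congruence.
Qed.

Lemma lists_lift {Q C : CatData} (p : CatFunData Q C)
  (Hf : forall f : Ar C, exists l : list (Ar Q), forall a, fa p a = f -> In a l) :
  forall ws : list (Ar C), exists ll : list (list (Ar Q)), forall xs, map (fa p) xs = ws -> In xs ll.
Proof.
  induction ws as [|w ws IH].
  - exists [[]]. intros xs E. destruct xs; [left; reflexivity|discriminate].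
  - destruct (Hf w) as [l Hl]. destruct IH as [ll Hll].
    exists (map (fun pr => fst pr :: snd pr) (list_prod l ll)).
    intros xs E. destruct xs as [|x xs]; [discriminate|]. simpl in E. injection E as E1 E2.
    apply (in_map (fun pr => fst pr :: snd pr) _ (x, xs)). apply in_prod; auto.
Qed.

Lemma W_fin {Q C : CatData} (p : CatFunData Q C) (Hf : CatFinitary p) : OpFinitary (Wfun p).
Proof.
  destruct Hf as [Ho Ha]. split.
  - intros [a b]. destruct (Ho a) as [la Hla]. destruct (Ho b) as [lb Hlb].
    exists (list_prod la lb). intros [x y] E. simpl in E. injection E as E1 E2.
    apply in_prod; auto.
  - intros [w ws]. destruct (Ha w) as [l Hl]. destruct (lists_lift p Ha ws) as [ll Hll].
    exists (list_prod l ll). intros [x xs] E. simpl in E. injection E as E1 E2.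
    apply in_prod; auto.
Qed.

Theorem mainTheorem6 (M : CatNFA) :
  IsOpNFA (Wfun (np M)) (nq0 M, nqf M) /\
  (forall x : Opr (Wop (nC M)),
     op_lang (Wfun (np M)) (nq0 M, nqf M) x <->
     exists f : Ar (nC M), cat_lang M f /\ x = (f, [])).
Proof.
  split.
  - split; [apply W_operad, nC_cat|].
    split; [apply W_operad, nQ_cat|].
    split; [apply W_functor; [apply nQ_cat|apply np_fun]|].
    split; [apply W_ulf; [apply nQ_cat|apply nC_cat|apply np_fun|apply np_ulf]|].
    apply W_fin, np_fin.
  - intros x. unfold op_lang, cat_lang. split.
    + intros [[a0 as0] [Hin [Hout Hf]]].
      destruct as0 as [|a1 as0]; [|discriminate].
      exists (fa (np M) a0). split.
      * exists a0. simpl in Hout. unfold Wout in Hout. simpl in Hout. injection Hout as E1 E2. auto.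
      * rewrite <- Hf. reflexivity.
    + intros [f [[a [E1 [E2 E3]]] ->]]. exists (a, []). split; [reflexivity|]. split.
      * simpl. unfold Wout. simpl. rewrite E1, E2. reflexivity.
      * simpl. rewrite E3. reflexivity.
Qed.
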